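(* Let $n\ge 2$, $N=2^n$, let $a_1,\dots,a_{N-1}$ be scalars, and for $1\le k\le N-1$ define \[ M_k = a_k \sum_{i=0}^{N-1-k} \big(\ket{i}\bra{i+k} + \ket{i+k}\bra{i}\big). \] Fix an integer $j$ with $1\le j<n$ and let $C_j=\{k : 1\le k<2^n,\ k\equiv 2^{j-1} \pmod{2^j}\}$. If $a_k=a_{2^{j-1}}$ for all $k\in C_j$, then \[ \sum_{k\in C_j} M_k = a_{2^{j-1}} \sum_{k\in C_j} X^{b_n(k)}\otimes X^{b_{n-1}(k)}\otimes\cdots\otimes X^{b_1(k)}, \] where $k=\sum_{i=1}^n b_i(k)2^{i-1}$ with $b_i(k)\in\{0,1\}$ is the $n$-bit binary representation of $k$, $X$ is the Pauli $X$ matrix, and $X^0=I$.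
   Context: Computational basis states $\ket{i}$, $i\in\{0,\dots,N-1\}$, of $n$ qubits are identified with $\ket{i_n i_{n-1}\cdots i_1}$ where $i=\sum_{l=1}^n i_l 2^{l-1}$, the leftmost tensor factor corresponding to the most significant bit. The matrices $M_k$ are the diagonal components of the $N\times N$ symmetric Toeplitz matrix with entries $a_{|i-j|}$. *)

(* Defs.v *)
From mathcomp Require Import all_boot all_order all_algebra.
From mathcomp.real_closed Require Import mxtens.
Set Implicit Arguments. Unset Strict Implicit. Unset Printing Implicit Defensive.
Import GRing.Theory Num.Theory.
Local Open Scope ring_scope.

(* Computational basis ket |i> of C^N (N = size), i : nat; it is the zero
   vector if i >= N (never used in that case below). *)
Definition ket (R : pzRingType) (N i : nat) : 'cV[R]_N := \col_(r < N) (r == i :> nat)%:R.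

Definition ketbra (R : pzRingType) (N i j : nat) : 'M[R]_N := ket R N i *m (ket R N j)^T.

Definition Mk (R : pzRingType) (N : nat) (a : nat -> R) (k : nat) : 'M[R]_N :=
  a k *: \sum_(0 <= i < N - k) (ketbra R N i (i + k) + ketbra R N (i + k) i).

Definition pauliX (R : pzRingType) : 'M[R]_2 := \matrix_(i < 2, j < 2) (i != j)%:R.

(* F (n-1) ⊗ F (n-2) ⊗ ... ⊗ F 0 as a 2^n x 2^n matrix (Kronecker product,
   leftmost factor = most significant bit); F l acts on bit l+1. *)
Fixpoint kronn (R : pzRingType) (n : nat) (F : nat -> 'M[R]_2) : 'M[R]_(2 ^ n) :=
  match n with
  | 0 => 1%:M
  | m.+1 => castmx (esym (expnS 2 m), esym (expnS 2 m)) (F m *t kronn m F)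
  end.

Definition bit (k i : nat) : bool := odd (k %/ 2 ^ i.-1).

Definition Xstring (R : pzRingType) (n k : nat) : 'M[R]_(2 ^ n) :=
  kronn n (fun l => pauliX R ^+ bit k l.+1).

(* Main.v *)
Require Import Defs.
From mathcomp Require Import all_boot all_order all_algebra.
From mathcomp Require Import zify.
From mathcomp.real_closed Require Import mxtens.
Set Implicit Arguments. Unset Strict Implicit. Unset Printing Implicit Defensive.
Import GRing.Theory Num.Theory.

Definition b (x i : nat) : bool := odd (x %/ 2 ^ i).

Lemma modD x l : x %% 2 ^ l.+1 = x %% 2 ^ l + 2 ^ l * b x l.
Proof.
rewrite {1}(divn_eq (x %% 2 ^ l.+1) (2 ^ l)) expnS -modn_divl modn2.
rewrite modn_dvdm; last by rewrite dvdn_mull.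
by rewrite addnC mulnC.
Qed.

Lemma split_eq p a c a' c' : a < p -> a' < p -> a + p * c = a' + p * c' -> a = a' /\ c = c'.
Proof.
move=> ha ha' E.
have p0 : 0 < p by apply: leq_ltn_trans ha.
have E1 := congr1 (fun z => z %% p) E; have E2 := congr1 (fun z => z %/ p) E.
move: E1 E2 => /=; rewrite ![_ + p * _]addnC ![p * _]mulnC !modnMDl !divnMDl // !modn_small // !divn_small //.
by rewrite !addn0.
Qed.

Lemma modeq_bits x y l :
  (x %% 2 ^ l == y %% 2 ^ l) = all (fun i => b x i == b y i) (iota 0 l).
Proof.
elim: l => [|l IH]; first by rewrite !expn0 !modn1.
have -> : iota 0 l.+1 = iota 0 l ++ [:: l] by rewrite -addn1 iotaD.
rewrite all_cat /= andbT !modD -IH.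
have hx := ltn_pmod x (expn_gt0 2 l); have hy := ltn_pmod y (expn_gt0 2 l).
apply/eqP/andP.
  move=> /(split_eq hx hy) [-> E]; split=> //.
  by move: E; case: (b x l); case: (b y l).
by case=> /eqP -> /eqP ->.
Qed.

Lemma P_bits x l :
  (x %% 2 ^ l.+1 == 2 ^ l) = (x %% 2 ^ l == 0) && b x l.
Proof.
rewrite modD; have hx := ltn_pmod x (expn_gt0 2 l).
case: (b x l); rewrite /= ?muln1 ?muln0 ?addn0.
  by rewrite -[X in _ == X]add0n eqn_add2r andbT.
by rewrite andbF; apply/negbTE; rewrite neq_ltn hx.
Qed.

Lemma mod0_bits x l : (x %% 2 ^ l == 0) = all (fun i => ~~ b x i) (iota 0 l).
Proof.
have := modeq_bits x 0 l; rewrite mod0n => ->.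
by apply: eq_all => i; rewrite /b div0n /=; case: odd.
Qed.

Lemma Q_sub r d l :
  ((r + d) %% 2 ^ l == r %% 2 ^ l) && (b (r + d) l != b r l) = (d %% 2 ^ l.+1 == 2 ^ l).
Proof.
rewrite P_bits -[X in _ == X %% _]addn0 eqn_modDl mod0n.
case: (boolP (d %% 2 ^ l == 0)) => //= H.
have Hd : 2 ^ l %| d by [].
rewrite /b divnDr // oddD.
by case: (odd (r %/ 2 ^ l)); case: (odd (d %/ 2 ^ l)).
Qed.

Fixpoint xorn (n r c : nat) : nat :=
  match n with 0 => 0 | m.+1 => xorn m r c + 2 ^ m * (b r m != b c m) end.

Lemma xorn_lt n r c : xorn n r c < 2 ^ n.
Proof.
elim: n => [|m IH] //=; rewrite expnS.
case: (b r m != b c m); rewrite ?muln1 ?muln0 ?addn0 mul2n -addnn.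
  by rewrite ltn_add2r.
by apply: (leq_trans IH); rewrite leq_addr.
Qed.

Lemma bit_low y m (z : nat) i : i < m -> b (y + 2 ^ m * z) i = b y i.
Proof.
move=> im; rewrite /b.
have -> : 2 ^ m * z = 2 ^ i * (2 ^ (m - i) * z) by rewrite mulnA -expnD subnKC // ltnW.
rewrite divnDr ?dvdn_mulr // mulKn ?expn_gt0 // oddD oddM oddX.
by rewrite subn_eq0 leqNgt im /= addbF.
Qed.

Lemma bit_top y m (z : bool) : y < 2 ^ m -> b (y + 2 ^ m * z) m = z.
Proof.
move=> ym; rewrite /b addnC mulnC divnMDl ?expn_gt0 // divn_small // addn0.
by case: z.
Qed.

Lemma xorn_bits n r c i : i < n -> b (xorn n r c) i = (b r i != b c i).
Proof.
elim: n => [|m IH] // im /=.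
rewrite ltnS leq_eqVlt in im; case/orP: im => [/eqP ->|lt].
  by rewrite bit_top // xorn_lt.
by rewrite bit_low // IH.
Qed.

Lemma xorn_uniq n r c k : k < 2 ^ n ->
  all (fun i => (b r i != b c i) == b k i) (iota 0 n) = (k == xorn n r c).
Proof.
move=> kn; have := modeq_bits k (xorn n r c) n.
rewrite !modn_small ?xorn_lt // => ->.
apply: eq_in_all => i; rewrite mem_iota add0n => /andP [_ i_n].
by rewrite xorn_bits // eq_sym.
Qed.

Lemma sum1 m M (Q : pred nat) d :
  \sum_(m <= k < M | Q k) (k == d) = (m <= d < M) && Q d.
Proof.
elim: M => [|M IH]; first by rewrite big_geq // ltn0 andbF.
case: (leqP m M) => mM; last first.
  rewrite big_geq //; case: (leqP m d) => //= md.
  by rewrite ltnNge (leq_trans _ md).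
rewrite big_mkcond big_nat_recr //= -big_mkcond IH.
case: (ltngtP d M) => [dM|Md|->].
- by rewrite ltnS (ltnW dM) !andbT; case: (Q M); rewrite /= addn0.
- by rewrite ltnS (leqNgt d M) Md !andbF /=; case: (Q M).
- by rewrite mM ltnS leqnn /=; case: (Q M).
Qed.

Definition Qrc l r c := (r %% 2 ^ l == c %% 2 ^ l) && (b r l != b c l).

Lemma P_xorn n l r c : l < n ->
  (xorn n r c %% 2 ^ l.+1 == 2 ^ l) = Qrc l r c.
Proof.
move=> ln; rewrite P_bits mod0_bits /Qrc modeq_bits xorn_bits //.
congr (_ && _); apply: eq_in_all => i; rewrite mem_iota add0n => /andP [_ il].
by rewrite xorn_bits ?(ltn_trans il) //; case: (b r i); case: (b c i).
Qed.

Lemma half_sum N l r d : 0 < d < N ->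
  \sum_(1 <= k < N | k %% 2 ^ l.+1 == 2 ^ l) ((r + d == r + k) + (r == r + d + k))
  = (d %% 2 ^ l.+1 == 2 ^ l).
Proof.
move=> /andP [d0 dN].
have := sum1 1 N (fun k => k %% 2 ^ l.+1 == 2 ^ l) d; rewrite d0 dN /= => <-.
apply: eq_bigr => k _; rewrite eqn_add2l eq_sym.
have -> : (r == r + d + k) = false by apply/eqP; lia.
by rewrite addn0.
Qed.

Lemma count_main n l r c : l < n -> r < 2 ^ n -> c < 2 ^ n ->
  \sum_(1 <= k < 2 ^ n | k %% 2 ^ l.+1 == 2 ^ l) ((c == r + k) + (r == c + k))
  = \sum_(1 <= k < 2 ^ n | k %% 2 ^ l.+1 == 2 ^ l)
       all (fun i => (b r i != b c i) == b k i) (iota 0 n).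
Proof.
move=> ln rn cn.
have -> : \sum_(1 <= k < 2 ^ n | k %% 2 ^ l.+1 == 2 ^ l)
       all (fun i => (b r i != b c i) == b k i) (iota 0 n)
   = \sum_(1 <= k < 2 ^ n | k %% 2 ^ l.+1 == 2 ^ l) (k == xorn n r c).
  rewrite big_nat_cond [RHS]big_nat_cond; apply: eq_bigr => k /andP [/andP [_ kn] _].
  by rewrite xorn_uniq.
have Pne0 : forall x, x %% 2 ^ l.+1 == 2 ^ l -> 0 < x.
  by move=> [|x] //; rewrite mod0n eq_sym expn_eq0.
rewrite sum1 xorn_lt andbT.
have -> : (0 < xorn n r c) && (xorn n r c %% 2 ^ l.+1 == 2 ^ l)
   = (xorn n r c %% 2 ^ l.+1 == 2 ^ l).
  by apply/andP/idP => [[]//|H]; split => //; apply: Pne0.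
rewrite P_xorn //.
case: (ltngtP r c) => [rc|cr|<-].
- have Hc : c = r + (c - r) by rewrite subnKC // ltnW.
  move: (c - r) Hc => d Hc; subst c.
  rewrite half_sum; last by apply/andP; split; lia.
  by rewrite -(Q_sub r d l) /Qrc [X in (X && _)]eq_sym; case: (b r l); case: (b (r + d) l).
- have Hr : r = c + (r - c) by rewrite subnKC // ltnW.
  move: (r - c) Hr => d Hr; subst r.
  under eq_bigr => k _ do rewrite addnC.
  rewrite half_sum; last by apply/andP; split; lia.
  by rewrite -(Q_sub c d l).
- rewrite /Qrc !eqxx /=.
  rewrite big_nat_cond big1 // => k /andP [/andP [k1 _] _].
  by rewrite -[X in X == _]addn0 eqn_add2l eq_sym (gtn_eqF k1).
Qed.

Lemma bit_mod x n i : i < n -> b (x %% 2 ^ n) i = b x i.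
Proof. by move=> i_n; rewrite {2}(divn_eq x (2 ^ n)) addnC mulnC bit_low. Qed.

Local Open Scope ring_scope.

Lemma pauliX_exp (R : pzRingType) (z : bool) (x y : 'I_2) :
  (pauliX R ^+ z) x y = ((x != y) == z)%:R.
Proof.
case: z; first by rewrite expr1 mxE; case: (x != y).
by rewrite expr0 mxE; case: (x == y).
Qed.

Lemma Xstring_entry (R : pzRingType) n k (r c : 'I_(2 ^ n)) :
  Xstring R n k r c = (all (fun i => (b r i != b c i) == b k i) (iota 0 n))%:R.
Proof.
elim: n r c => [|n IH] r c.
  rewrite /Xstring /= mxE; case: r c => [[|r] //] ? [[|c] //] ?.
have -> : Xstring R n.+1 k = castmx (esym (expnS 2 n), esym (expnS 2 n))
   (pauliX R ^+ bit k n.+1 *t Xstring R n k) by [].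
rewrite castmxE !mxE IH pauliX_exp -natrM mulnb.
have -> : iota 0 n.+1 = iota 0 n ++ [:: n] by rewrite -addn1 iotaD.
rewrite all_cat /= andbT andbC; congr ((_ && _)%:R).
  apply: eq_in_all => i; rewrite mem_iota add0n => /andP [_ i_n].
  by rewrite !bit_mod.
rewrite /bit /b /= -!val_eqE /=; congr (_ == _).
have hr : (r %/ 2 ^ n < 2)%N by rewrite ltn_divLR ?expn_gt0 // -expnS.
have hc : (c %/ 2 ^ n < 2)%N by rewrite ltn_divLR ?expn_gt0 // -expnS.
move: (r %/ 2 ^ n)%N (c %/ 2 ^ n)%N hr hc => [|[|?]] // [|[|?]] //.
Qed.

Lemma ketbra_entry (R : pzRingType) N i j (r c : 'I_N) :
  ketbra R N i j r c = ((r == i :> nat) && (c == j :> nat))%:R.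
Proof. by rewrite /ketbra /ket !mxE big_ord1 !mxE -natrM mulnb. Qed.

Lemma sum1b m M d (X : bool) :
  (\sum_(m <= i < M) ((i == d) && X) = (m <= d < M) && X)%N.
Proof.
case: X; last by rewrite andbF big1 // => i _; rewrite andbF.
rewrite andbT; under eq_bigr => i _ do rewrite andbT.
by have := sum1 m M xpredT d; rewrite /= andbT.
Qed.

Lemma Mk_entry (R : pzRingType) N (a : nat -> R) k (r c : 'I_N) :
  Mk N a k r c = a k * ((c == (r + k)%N :> nat) + (r == (c + k)%N :> nat))%:R.
Proof.
rewrite /Mk !mxE summxE; congr (_ * _).
under eq_bigr => i _ do rewrite mxE !ketbra_entry -natrD.
rewrite -natr_sum big_split /=; congr (_ + _)%:R.
  have E : forall i, ((r == i :> nat) && (c == (i + k)%N :> nat)) = ((i == r) && (c == (r + k)%N :> nat)).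
    by move=> i; apply/idP/idP => /andP [/eqP H1 /eqP H2]; apply/andP; split; apply/eqP; lia.
  under eq_bigr => i _ do rewrite E.
  rewrite sum1b /=; case: eqP => H; rewrite ?andbT ?andbF //; have := ltn_ord c; lia.
have E : forall i, ((r == (i + k)%N :> nat) && (c == i :> nat)) = ((i == c) && (r == (c + k)%N :> nat)).
  by move=> i; apply/idP/idP => /andP [/eqP H1 /eqP H2]; apply/andP; split; apply/eqP; lia.
under eq_bigr => i _ do rewrite E.
rewrite sum1b /=; case: eqP => H; rewrite ?andbT ?andbF //; have := ltn_ord r; lia.
Qed.

Theorem theorem2 (R : numClosedFieldType) (n : nat) (a : nat -> R) (j : nat) :
  (2 <= n)%N -> (1 <= j < n)%N ->
  (forall k : nat, (1 <= k < 2 ^ n)%N -> (k %% 2 ^ j = 2 ^ j.-1)%N ->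
     a k = a (2 ^ j.-1)%N) ->
  \sum_(1 <= k < 2 ^ n | (k %% 2 ^ j == 2 ^ j.-1)%N) Mk (2 ^ n) a k
  = a (2 ^ j.-1)%N *: \sum_(1 <= k < 2 ^ n | (k %% 2 ^ j == 2 ^ j.-1)%N) Xstring R n k.
Proof.
move=> n2 /andP [j1 jn] Ha.
case: j j1 jn Ha => [|l] // _ ln Ha /=.
apply/matrixP => r c.
rewrite !mxE !summxE.
transitivity (\sum_(1 <= k < 2 ^ n | (k %% 2 ^ l.+1 == 2 ^ l)%N)
                a (2 ^ l)%N * ((c == (r + k)%N :> nat) + (r == (c + k)%N :> nat))%:R).
  rewrite big_nat_cond [RHS]big_nat_cond; apply: eq_bigr => k /andP [/andP [k1 kn] Pk].
  by rewrite Mk_entry (Ha k) ?k1 //; apply/eqP.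
rewrite -mulr_sumr; congr (_ * _).
under [RHS]eq_bigr => k _ do rewrite Xstring_entry.
by rewrite -!natr_sum count_main // ltnW.
Qed.
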